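(* The variety $\mathcal{V}_{\sigma\ell\mathbb{G}}$ is generated by $\mathbb{R}$: every $G\in\mathcal{V}_{\sigma\ell\mathbb{G}}$ is isomorphic to a subalgebra of a homomorphic image (quotient) of a power of the algebra $(\mathbb{R},0,+,-,\vee,\wedge,\bigvee^-)$, where in $\mathbb{R}$ one sets $\bigvee^-(g,f_1,f_2,\dots)=\sup_{n\ge1}\{f_n\wedge g\}$. In particular $\mathcal{V}_{\sigma\ell\mathbb{G}}$ is the class of all algebras in its language satisfying every equation true in $\mathbb{R}$.
   Context: $\mathcal{V}_{\sigma\ell\mathbb{G}}$ is the infinitary variety of algebras $(G,0,+,-,\vee,\wedge,\bigvee^-)$, $\bigvee^-$ of countably infinite arity with $\bigvee_{n\ge1}^g f_n:=\bigvee^-(g,f_1,f_2,\dots)$, satisfying the $\ell$-group axioms and (A1) $\bigvee_{n\ge1}^g f_n=\bigvee_{n\ge1}^g(f_n\wedge g)$; (A2) $\bigvee_{n\ge1}^g f_n=(f_1\wedge g)\vee\bigvee^-(g,f_2,f_3,\dots)$; (A3) $\bigvee_{n\ge1}^g(f_n\wedge h)\le h$ ($a\le b$ meaning $a\wedge b=a$). Morphisms preserve all operations. *)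

(* Defs.v *)
From Stdlib Require Import Reals.
Open Scope R_scope.

(** Algebras in the language (0, +, -, \/, /\, \bigvee^-) ;
    [sbig g f] stands for \bigvee^-(g, f_1, f_2, ...) with f_n := f (n-1). *)
Record slg := Slg {
  car :> Type;
  s0 : car;
  sadd : car -> car -> car;
  sopp : car -> car;
  sjoin : car -> car -> car;
  smeet : car -> car -> car;
  sbig : car -> (nat -> car) -> car
}.
Arguments s0 {s}.
Arguments sadd {s}.
Arguments sopp {s}.
Arguments sjoin {s}.
Arguments smeet {s}.
Arguments sbig {s}.

Definition sle {A : slg} (a b : A) : Prop := smeet a b = a.

Record in_variety (A : slg) : Prop := {
  ax_add_assoc : forall x y z : A, sadd x (sadd y z) = sadd (sadd x y) z;
  ax_add_comm : forall x y : A, sadd x y = sadd y x;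
  ax_add_0 : forall x : A, sadd x s0 = x;
  ax_add_opp : forall x : A, sadd x (sopp x) = s0;
  ax_join_assoc : forall x y z : A, sjoin x (sjoin y z) = sjoin (sjoin x y) z;
  ax_join_comm : forall x y : A, sjoin x y = sjoin y x;
  ax_meet_assoc : forall x y z : A, smeet x (smeet y z) = smeet (smeet x y) z;
  ax_meet_comm : forall x y : A, smeet x y = smeet y x;
  ax_absorb_jm : forall x y : A, sjoin x (smeet x y) = x;
  ax_absorb_mj : forall x y : A, smeet x (sjoin x y) = x;
  ax_add_join : forall x y z : A, sadd x (sjoin y z) = sjoin (sadd x y) (sadd x z);
  ax_add_meet : forall x y z : A, sadd x (smeet y z) = smeet (sadd x y) (sadd x z);
  ax_A1 : forall (g : A) (f : nat -> A), sbig g f = sbig g (fun n => smeet (f n) g);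
  ax_A2 : forall (g : A) (f : nat -> A),
      sbig g f = sjoin (smeet (f O) g) (sbig g (fun n => f (S n)));
  ax_A3 : forall (g h : A) (f : nat -> A), sle (sbig g (fun n => smeet (f n) h)) h
}.

Definition is_hom {A B : slg} (h : A -> B) : Prop :=
  h s0 = s0 /\
  (forall x y, h (sadd x y) = sadd (h x) (h y)) /\
  (forall x, h (sopp x) = sopp (h x)) /\
  (forall x y, h (sjoin x y) = sjoin (h x) (h y)) /\
  (forall x y, h (smeet x y) = smeet (h x) (h y)) /\
  (forall g f, h (sbig g f) = sbig (h g) (fun n => h (f n))).

Definition Rsup_set (g : R) (f : nat -> R) : R -> Prop :=
  fun x => exists n, x = Rmin (f n) g.

Lemma Rsup_set_bound (g : R) (f : nat -> R) : bound (Rsup_set g f).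
Proof. exists g; intros x [n ->]; apply Rmin_r. Qed.

Lemma Rsup_set_ne (g : R) (f : nat -> R) : exists x, Rsup_set g f x.
Proof. exists (Rmin (f O) g); exists O; reflexivity. Qed.

Definition Rbig (g : R) (f : nat -> R) : R :=
  proj1_sig (completeness (Rsup_set g f) (Rsup_set_bound g f) (Rsup_set_ne g f)).

Lemma Rbig_lub (g : R) (f : nat -> R) : is_lub (Rsup_set g f) (Rbig g f).
Proof. unfold Rbig; destruct completeness; assumption. Qed.

Definition R_alg : slg := Slg R 0 Rplus Ropp Rmax Rmin Rbig.

Definition Rpow (I : Type) : slg :=
  Slg (I -> R) (fun _ => 0)
      (fun x y i => x i + y i) (fun x i => - x i)
      (fun x y i => Rmax (x i) (y i)) (fun x y i => Rmin (x i) (y i))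
      (fun g f i => Rbig (g i) (fun n => f n i)).

Inductive term (X : Type) : Type :=
| tvar : X -> term X
| t0 : term X
| tadd : term X -> term X -> term X
| topp : term X -> term X
| tjoin : term X -> term X -> term X
| tmeet : term X -> term X -> term X
| tbig : term X -> (nat -> term X) -> term X.
Arguments tvar {X}. Arguments t0 {X}. Arguments tadd {X}. Arguments topp {X}.
Arguments tjoin {X}. Arguments tmeet {X}. Arguments tbig {X}.

Fixpoint teval {X : Type} (A : slg) (v : X -> A) (t : term X) : A :=
  match t with
  | tvar x => v x
  | t0 => s0
  | tadd s u => sadd (teval A v s) (teval A v u)
  | topp s => sopp (teval A v s)
  | tjoin s u => sjoin (teval A v s) (teval A v u)
  | tmeet s u => smeet (teval A v s) (teval A v u)
  | tbig s fs => sbig (teval A v s) (fun n => teval A v (fs n))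
  end.

Definition holds_in (A : slg) {X : Type} (s t : term X) : Prop :=
  forall v : X -> A, teval A v s = teval A v t.

(* Main.v *)
Require Import Defs.
From Stdlib Require Import Reals.

From Stdlib Require Import Reals Lra Lia ZArith Classical ClassicalEpsilon Cantor.

Inductive Inst (G : slg) : Type :=
| Iadd (x y : G) | Iopp (x : G) | Ijoin (x y : G) | Imeet (x y : G) | Izero
| Ibig (g : G) (f : nat -> G).
Arguments Iadd {G}. Arguments Iopp {G}. Arguments Ijoin {G}. Arguments Imeet {G}.
Arguments Izero {G}. Arguments Ibig {G}.

Definition sat {G : slg} (h : G -> R) (i : Inst G) : Prop :=
  match i with
  | Iadd x y => h (sadd x y) = h x + h y
  | Iopp x => h (sopp x) = - h x
  | Ijoin x y => h (sjoin x y) = Rmax (h x) (h y)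
  | Imeet x y => h (smeet x y) = Rmin (h x) (h y)
  | Izero => h s0 = 0
  | Ibig g f => h (sbig g f) = Rbig (h g) (fun n => h (f n))
  end.

Definition elem {G : slg} (i : Inst G) (m : nat) : G :=
  match i with
  | Iadd x y => match m with 0 => x | 1 => y | _ => sadd x y end
  | Iopp x => match m with 0 => x | 1 => sopp x | _ => s0 end
  | Ijoin x y => match m with 0 => x | 1 => y | _ => sjoin x y end
  | Imeet x y => match m with 0 => x | 1 => y | _ => smeet x y end
  | Izero => s0
  | Ibig g f => match Cantor.of_nat m with
                | (0, _) => sbig g f
                | (1, _) => g
                | (2, n) => f n
                | (_, n) => smeet (f n) g
                end
  end.



Section LG.
Variable G : slg.
Hypothesis HG : in_variety G.

Local Notation "a + b" := (@sadd G a b).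
Local Notation "- a" := (@sopp G a).
Local Notation "a \v b" := (@sjoin G a b) (at level 40, left associativity).
Local Notation "a \m b" := (@smeet G a b) (at level 40, left associativity).
Local Notation "0" := (@s0 G).
Local Notation "a <= b" := (@sle G a b).

Lemma addA (x y z : G) : x + (y + z) = x + y + z. Proof. apply (ax_add_assoc _ HG). Qed.
Lemma addC (x y : G) : x + y = y + x. Proof. apply (ax_add_comm _ HG). Qed.
Lemma addr0 (x : G) : x + 0 = x. Proof. apply (ax_add_0 _ HG). Qed.
Lemma add0r (x : G) : 0 + x = x. Proof. rewrite addC; apply addr0. Qed.
Lemma addrN (x : G) : x + - x = 0. Proof. apply (ax_add_opp _ HG). Qed.
Lemma addNr (x : G) : - x + x = 0. Proof. rewrite addC; apply addrN. Qed.
Lemma addKl (x y : G) : - x + (x + y) = y.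
Proof. rewrite addA, addNr; apply add0r. Qed.
Lemma addKr (x y : G) : x + (- x + y) = y.
Proof. rewrite addA, addrN; apply add0r. Qed.
Lemma add_cancel (x y z : G) : x + y = x + z -> y = z.
Proof. intros H. rewrite <- (addKl x y), <- (addKl x z), H; reflexivity. Qed.
Lemma oppK (x : G) : - - x = x.
Proof. apply (add_cancel (- x)). rewrite addrN, addNr; reflexivity. Qed.
Lemma opp0 : - 0 = (0:G).
Proof. rewrite <- (add0r (- 0)). apply addrN. Qed.
Lemma add_swap (a b c : G) : a + (b + c) = b + (a + c).
Proof. rewrite !addA, (addC a). reflexivity. Qed.
Lemma add4 (a b c d : G) : (a + b) + (c + d) = (a + c) + (b + d).
Proof. rewrite <- !addA. f_equal. apply add_swap. Qed.
Lemma oppD (x y : G) : - (x + y) = - x + - y.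
Proof.
  apply (add_cancel (x + y)). rewrite addrN.
  rewrite add4, !addrN, addr0. reflexivity.
Qed.
Lemma opp_eq (x y : G) : x + y = 0 -> y = - x.
Proof. intros H. apply (add_cancel x). rewrite H, addrN. reflexivity. Qed.

Lemma joinA (x y z : G) : x \v (y \v z) = x \v y \v z. Proof. apply (ax_join_assoc _ HG). Qed.
Lemma joinC (x y : G) : x \v y = y \v x. Proof. apply (ax_join_comm _ HG). Qed.
Lemma meetA (x y z : G) : x \m (y \m z) = x \m y \m z. Proof. apply (ax_meet_assoc _ HG). Qed.
Lemma meetC (x y : G) : x \m y = y \m x. Proof. apply (ax_meet_comm _ HG). Qed.
Lemma absJM (x y : G) : x \v (x \m y) = x. Proof. apply (ax_absorb_jm _ HG). Qed.
Lemma absMJ (x y : G) : x \m (x \v y) = x. Proof. apply (ax_absorb_mj _ HG). Qed.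
Lemma addJ (x y z : G) : x + (y \v z) = (x + y) \v (x + z). Proof. apply (ax_add_join _ HG). Qed.
Lemma addM (x y z : G) : x + (y \m z) = (x + y) \m (x + z). Proof. apply (ax_add_meet _ HG). Qed.
Lemma addJr (x y z : G) : (y \v z) + x = (y + x) \v (z + x).
Proof. rewrite !(addC _ x). apply addJ. Qed.
Lemma addMr (x y z : G) : (y \m z) + x = (y + x) \m (z + x).
Proof. rewrite !(addC _ x). apply addM. Qed.

Lemma meetxx (x : G) : x \m x = x.
Proof. rewrite <- (absJM x x) at 2. apply absMJ. Qed.
Lemma joinxx (x : G) : x \v x = x.
Proof. rewrite <- (absMJ x x) at 2. apply absJM. Qed.
Lemma le_refl (x : G) : x <= x. Proof. apply meetxx. Qed.
Lemma le_join (x y : G) : x <= y <-> x \v y = y.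
Proof.
  unfold sle; split; intros H.
  - rewrite <- H, joinC, meetC. apply absJM.
  - rewrite <- H. apply absMJ.
Qed.
Lemma le_antisym (x y : G) : x <= y -> y <= x -> x = y.
Proof. unfold sle; intros H1 H2. rewrite <- H1, meetC. exact H2. Qed.
Lemma le_trans (x y z : G) : x <= y -> y <= z -> x <= z.
Proof. unfold sle; intros H1 H2. rewrite <- H1, <- meetA, H2. reflexivity. Qed.
Lemma meet_l (x y : G) : x \m y <= x.
Proof. unfold sle. rewrite (meetC x y), <- meetA, meetxx. reflexivity. Qed.
Lemma meet_r (x y : G) : x \m y <= y.
Proof. rewrite meetC. apply meet_l. Qed.
Lemma join_l (x y : G) : x <= x \v y.
Proof. apply absMJ. Qed.
Lemma join_r (x y : G) : y <= x \v y.
Proof. rewrite joinC. apply join_l. Qed.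
Lemma meet_glb (x y z : G) : z <= x -> z <= y -> z <= x \m y.
Proof. unfold sle; intros H1 H2. rewrite meetA, H1, H2. reflexivity. Qed.
Lemma join_lub (x y z : G) : x <= z -> y <= z -> x \v y <= z.
Proof. rewrite !le_join; intros H1 H2. rewrite <- joinA, H2, H1. reflexivity. Qed.
Lemma meet_eq_l (x y : G) : x <= y -> x \m y = x. Proof. auto. Qed.
Lemma join_eq_r (x y : G) : x <= y -> x \v y = y. Proof. apply le_join. Qed.
Lemma meet_mono (x x' y y' : G) : x <= x' -> y <= y' -> x \m y <= x' \m y'.
Proof.
  intros H1 H2. apply meet_glb.
  - eapply le_trans; [apply meet_l|exact H1].
  - eapply le_trans; [apply meet_r|exact H2].
Qed.
Lemma join_mono (x x' y y' : G) : x <= x' -> y <= y' -> x \v y <= x' \v y'.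
Proof.
  intros H1 H2. apply join_lub.
  - eapply le_trans; [exact H1|apply join_l].
  - eapply le_trans; [exact H2|apply join_r].
Qed.

Lemma le_add (x y z : G) : x <= y -> x + z <= y + z.
Proof. unfold sle; intros H. rewrite <- addMr, H. reflexivity. Qed.
Lemma le_add_l (x y z : G) : x <= y -> z + x <= z + y.
Proof. rewrite !(addC z). apply le_add. Qed.
Lemma le_add_cancel (x y z : G) : x + z <= y + z -> x <= y.
Proof.
  intros H. apply (le_add _ _ (- z)) in H. rewrite <- !addA, addrN, !addr0 in H. exact H.
Qed.
Lemma le_add2 (x y x' y' : G) : x <= y -> x' <= y' -> x + x' <= y + y'.
Proof. intros H1 H2. eapply le_trans; [apply le_add; exact H1|apply le_add_l; exact H2]. Qed.
Lemma le_opp (x y : G) : x <= y -> - y <= - x.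
Proof.
  intros H. apply (le_add _ _ (- x + - y)) in H.
  rewrite addKr in H. rewrite (add_swap y), addrN, addr0 in H. exact H.
Qed.
Lemma le_opp_iff (x y : G) : - y <= - x -> x <= y.
Proof. intros H. apply le_opp in H. rewrite !oppK in H. exact H. Qed.
Lemma opp_meet (x y : G) : - (x \m y) = - x \v - y.
Proof.
  apply le_antisym.
  - apply le_opp_iff. rewrite oppK. apply meet_glb.
    + rewrite <- (oppK x) at 2. apply le_opp, join_l.
    + rewrite <- (oppK y) at 2. apply le_opp, join_r.
  - apply join_lub; apply le_opp; [apply meet_l|apply meet_r].
Qed.
Lemma opp_join (x y : G) : - (x \v y) = - x \m - y.
Proof.
  rewrite <- (oppK x), <- (oppK y), <- opp_meet, !oppK. reflexivity.
Qed.
Lemma meet_join_sum (x y : G) : (x \m y) + (x \v y) = x + y.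
Proof.
  apply (add_cancel (- (x \m y))). rewrite addKl, opp_meet, addJr.
  rewrite addKl, (addC x y), addKl. apply joinC.
Qed.
Lemma le_sub0 (x y : G) : x <= y <-> 0 <= y + - x.
Proof.
  split; intros H.
  - apply (le_add _ _ (- x)) in H. rewrite addrN in H. exact H.
  - apply (le_add _ _ x) in H. rewrite add0r, <- addA, addNr, addr0 in H. exact H.
Qed.

Definition pos (x : G) := x \v 0.
Lemma pos_ge0 x : 0 <= pos x. Proof. apply join_r. Qed.
Lemma pos_ge x : x <= pos x. Proof. apply join_l. Qed.
Lemma pos_mono x y : x <= y -> pos x <= pos y.
Proof. intros H. apply join_mono; [exact H|apply le_refl]. Qed.
Lemma pos_lub x u : x <= u -> 0 <= u -> pos x <= u.
Proof. apply join_lub. Qed.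
Lemma pos_of_ge0 x : 0 <= x -> pos x = x.
Proof. intros H. unfold pos. rewrite joinC. apply join_eq_r, H. Qed.
Lemma ge0_add x y : 0 <= x -> 0 <= y -> 0 <= x + y.
Proof. intros H1 H2. rewrite <- (addr0 0). apply le_add2; auto. Qed.
Lemma pos_add_le x y : pos (x + y) <= pos x + pos y.
Proof.
  apply pos_lub. apply le_add2; apply pos_ge. apply ge0_add; apply pos_ge0.
Qed.
Lemma pos_opp_add x : x + pos (- x) = pos x.
Proof. unfold pos. rewrite addJ, addrN, addr0. apply joinC. Qed.
Lemma pos_perp x : pos x \m pos (- x) = 0.
Proof.
  assert (E : pos (- x) = pos x + - x).
  { rewrite <- (pos_opp_add x), addC, addKl. reflexivity. }
  rewrite E. rewrite <- (addr0 (pos x)) at 1. rewrite <- addM.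
  assert (E2 : 0 \m - x = - pos x).
  { unfold pos. rewrite opp_join, opp0, meetC. reflexivity. }
  rewrite E2. apply addrN.
Qed.

Lemma riesz (a b c : G) : 0 <= a -> 0 <= b -> 0 <= c ->
  (a + b) \m c <= (a \m c) + (b \m c).
Proof.
  intros Ha Hb Hc. rewrite addMr. apply meet_glb.
  - rewrite addM. apply meet_mono.
    + apply le_refl.
    + rewrite <- (add0r c) at 1. apply le_add; exact Ha.
  - eapply le_trans; [apply meet_r|]. rewrite <- (addr0 c) at 1. apply le_add_l.
    apply meet_glb; auto.
Qed.

Definition perp (a b : G) := a \m b = 0.
Lemma meet_ge0 a b : 0 <= a -> 0 <= b -> 0 <= a \m b.
Proof. intros; apply meet_glb; auto. Qed.
Lemma perp_add b a a' : 0 <= b -> 0 <= a -> 0 <= a' -> perp b a -> perp b a' -> perp b (a + a').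
Proof.
  unfold perp; intros Hb Ha Ha' H1 H2. apply le_antisym.
  - rewrite meetC. eapply le_trans; [apply riesz; auto|]. rewrite !(meetC _ b), H1, H2, addr0. apply le_refl.
  - apply meet_ge0; auto. apply ge0_add; auto.
Qed.
Lemma perp_le b a a' : 0 <= b -> 0 <= a' -> a' <= a -> perp b a -> perp b a'.
Proof.
  unfold perp; intros Hb Ha' H H1. apply le_antisym.
  - rewrite <- H1. apply meet_mono; auto. apply le_refl.
  - apply meet_ge0; auto.
Qed.
Lemma perp_sym a b : perp a b -> perp b a.
Proof. unfold perp. rewrite meetC. auto. Qed.

Fixpoint nsm (n : nat) (x : G) : G := match n with O => 0 | S n => x + nsm n x end.
Lemma nsm_plus n m x : nsm (n + m) x = nsm n x + nsm m x.
Proof. induction n; simpl. rewrite add0r; auto. rewrite IHn, addA. reflexivity. Qed.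
Lemma nsm_mul n m x : nsm (n * m) x = nsm n (nsm m x).
Proof. induction n; simpl; auto. rewrite nsm_plus, IHn. reflexivity. Qed.
Lemma nsmD n x y : nsm n (x + y) = nsm n x + nsm n y.
Proof. induction n; simpl. rewrite addr0; auto. rewrite IHn, add4. reflexivity. Qed.
Lemma nsm0 n : nsm n 0 = 0.
Proof. induction n; simpl; auto. rewrite IHn, addr0; auto. Qed.
Lemma nsmN n x : nsm n (- x) = - nsm n x.
Proof. apply opp_eq. rewrite <- nsmD, addrN. apply nsm0. Qed.
Lemma nsm_le n x y : x <= y -> nsm n x <= nsm n y.
Proof. intros H; induction n; simpl. apply le_refl. apply le_add2; auto. Qed.
Lemma nsm_ge0 n x : 0 <= x -> 0 <= nsm n x.
Proof. intros H. rewrite <- (nsm0 n). apply nsm_le, H. Qed.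
Lemma nsm_mono n m x : 0 <= x -> (n <= m)%nat -> nsm n x <= nsm m x.
Proof.
  intros Hx Hnm. replace m with (n + (m - n))%nat by lia. rewrite nsm_plus.
  rewrite <- (addr0 (nsm n x)) at 1. apply le_add_l. apply nsm_ge0, Hx.
Qed.
Lemma perp_nsm b a n : 0 <= b -> 0 <= a -> perp b a -> perp b (nsm n a).
Proof.
  intros Hb Ha H. induction n; simpl.
  - unfold perp. apply le_antisym. apply meet_r. apply meet_ge0; auto. apply le_refl.
  - apply perp_add; auto. apply nsm_ge0, Ha.
Qed.
Lemma pos_nsm_le n x : pos (nsm n x) <= nsm n (pos x).
Proof. apply pos_lub. apply nsm_le, pos_ge. apply nsm_ge0, pos_ge0. Qed.

Lemma perp_comb b u v N M : 0 <= b -> perp b (pos u) -> perp b (pos v) ->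
  perp b (pos (nsm N u + nsm M v)).
Proof.
  intros Hb H1 H2. eapply perp_le; [auto|apply pos_ge0| |].
  eapply le_trans; [apply pos_add_le|]. apply le_add2; apply pos_nsm_le.
  apply perp_add; auto; try (apply nsm_ge0, pos_ge0); apply perp_nsm; auto; apply pos_ge0.
Qed.

Lemma pos_sub_perp u v : perp u v -> pos (u + - v) = u.
Proof.
  unfold perp; intros H.
  transitivity (u + - (u \m v)).
  - rewrite opp_meet, addJ, addrN. unfold pos. apply joinC.
  - rewrite H, opp0, addr0. reflexivity.
Qed.
Lemma pos_nsm n z : pos (nsm n z) = nsm n (pos z).
Proof.
  assert (Hz : z = pos z + - pos (- z)).
  { rewrite <- (pos_opp_add z). rewrite <- addA, addrN, addr0. reflexivity. }
  rewrite Hz at 1. rewrite nsmD, nsmN. apply pos_sub_perp.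
  apply perp_nsm; try apply nsm_ge0; try apply pos_ge0.
  apply perp_sym, perp_nsm; try apply pos_ge0. apply perp_sym, pos_perp.
Qed.
Lemma join_pos x y : x \v y = x + pos (y + - x).
Proof. unfold pos. rewrite addJ, addr0, (add_swap x y), addrN, addr0. apply joinC. Qed.
Lemma nsm_join n x y : nsm n (x \v y) = nsm n x \v nsm n y.
Proof.
  rewrite !join_pos, nsmD, <- pos_nsm, nsmD, nsmN. reflexivity.
Qed.


Lemma le_mv_r (a b u : G) : a + b <= u -> a <= u + - b.
Proof. intros H. apply (le_add _ _ (- b)) in H. rewrite <- addA, addrN, addr0 in H. exact H. Qed.
Lemma le_mv_l (a b u : G) : a <= u + - b -> a + b <= u.
Proof. intros H. apply (le_add _ _ b) in H. rewrite <- addA, addNr, addr0 in H. exact H. Qed.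
Definition islub (x : nat -> G) (s : G) :=
  (forall n, x n <= s) /\ (forall u, (forall n, x n <= u) -> s <= u).

Lemma big_ub (g : G) f n : f n \m g <= sbig g f.
Proof.
  revert f; induction n; intros f; rewrite (ax_A2 _ HG g f).
  - apply join_l.
  - eapply le_trans; [apply (IHn (fun k => f (S k)))|apply join_r].
Qed.
Lemma big_least (g h : G) f : (forall n, f n \m g <= h) -> sbig g f <= h.
Proof.
  intros H. rewrite (ax_A1 _ HG g f).
  assert (E : (fun n => f n \m g) = (fun n => (f n \m g) \m h)).
  { apply FunctionalExtensionality.functional_extensionality. intros n. symmetry. apply H. }
  rewrite E. apply (ax_A3 _ HG g h (fun n => f n \m g)).
Qed.
Lemma islub_big (g : G) f : islub (fun n => f n \m g) (sbig g f).
Proof. split. intros n; apply (big_ub g f n). intros u Hu; apply (big_least g u f Hu). Qed.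
Lemma lub_bounded (x : nat -> G) B : (forall n, x n <= B) -> islub x (sbig B x).
Proof.
  intros H. assert (E : x = fun n => x n \m B).
  { apply FunctionalExtensionality.functional_extensionality. intros n. symmetry. apply H. }
  pattern x at 1. rewrite E. apply islub_big.
Qed.
Lemma lub_unique x s t : islub x s -> islub x t -> s = t.
Proof. intros [H1 H2] [H3 H4]. apply le_antisym; auto. Qed.
Lemma lub_translate x s d : islub x s -> islub (fun n => x n + d) (s + d).
Proof.
  intros [H1 H2]. split.
  - intros n. apply le_add, H1.
  - intros u Hu. assert (s <= u + - d).
    { apply H2. intros n. specialize (Hu n). apply (le_add _ _ (- d)) in Hu.
      rewrite <- addA, addrN, addr0 in Hu. exact Hu. }
    apply (le_add _ _ d) in H. rewrite <- addA, addNr, addr0 in H. exact H.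
Qed.
Lemma lub_nsm x s k : islub x s -> islub (fun n => nsm k (x n)) (nsm k s).
Proof.
  intros Hs. induction k; simpl.
  - split. intros; apply le_refl. intros u Hu. apply (Hu O).
  - destruct IHk as [I1 I2]. destruct Hs as [H1 H2]. split.
    + intros n. apply le_add2; auto.
    + intros u Hu.
      assert (Hnm : forall n m, x n + nsm k (x m) <= u).
      { intros n m. eapply le_trans.
        - apply le_add2. apply (join_l (x n) (x m)). apply nsm_le, (join_r (x n) (x m)).
        - change (nsm (S k) (x n \v x m) <= u). rewrite nsm_join.
          apply join_lub; apply Hu. }
      assert (Hm : forall m, nsm k (x m) <= u + - s).
      { intros m. assert (s <= u + - nsm k (x m)).
        { apply H2. intros n. apply le_mv_r. apply Hnm. }
        apply le_mv_l in H. rewrite addC in H. apply le_mv_r, H. }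
      apply I2, le_mv_l in Hm. rewrite addC. exact Hm.
Qed.
Lemma lub_pos x s : islub x s -> islub (fun n => pos (x n)) (pos s).
Proof.
  intros [H1 H2]. split.
  - intros n. apply pos_mono, H1.
  - intros u Hu. apply pos_lub.
    + apply H2. intros n. eapply le_trans; [apply pos_ge|apply Hu].
    + eapply le_trans; [apply pos_ge0|apply (Hu O)].
Qed.
Lemma lub_meet y S b T : islub y S -> (forall n, b \m y n <= T) -> b \m S <= T.
Proof.
  intros [H1 H2] H.
  assert (HS : S <= T + (b \v S) + - b).
  { apply H2. intros n.
    assert (E : y n = (b \m y n) + (b \v y n) + - b).
    { rewrite meet_join_sum, (addC b), <- addA, addrN, addr0. reflexivity. }
    rewrite E. apply le_add. apply le_add2. apply H. apply join_mono. apply le_refl. apply H1. }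
  apply le_mv_l in HS. rewrite addC, <- (meet_join_sum b S) in HS.
  apply le_add_cancel in HS. exact HS.
Qed.

Lemma archimedean (a b : G) : (forall n, nsm n b <= a) -> b <= 0.
Proof.
  intros H. destruct (lub_bounded (fun n => nsm n b) a H) as [H1 H2].
  set (Sb := sbig a (fun n => nsm n b)) in *.
  assert (Hs : Sb <= Sb + - b).
  { apply H2. intros n. specialize (H1 (S n)). simpl in H1.
    apply le_mv_r. rewrite addC. exact H1. }
  apply le_mv_l in Hs. rewrite addC in Hs. apply le_mv_r in Hs. rewrite addrN in Hs.
  exact Hs.
Qed.

Lemma fin_lemma (b c x : G) : 0 <= b -> b <= c ->
  (forall n, perp b (pos (nsm n c + - x))) -> b <= 0.
Proof.
  intros Hb Hbc H. apply (archimedean (pos x)). intros n.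
  set (t := nsm n b + - x).
  assert (P1 : perp (nsm n b) (pos t)).
  { apply perp_sym, perp_nsm; auto. apply pos_ge0.
    apply perp_sym. apply (perp_le _ (pos (nsm n c + - x))); auto. apply pos_ge0.
    apply pos_mono, le_add, nsm_le, Hbc. }
  assert (P2 : pos t <= nsm n b + pos (- x)).
  { apply pos_lub. apply le_add_l, pos_ge. apply ge0_add. apply nsm_ge0, Hb. apply pos_ge0. }
  assert (P3 : pos t <= pos (- x)).
  { eapply le_trans. apply (meet_glb _ _ (pos t) (le_refl _) P2).
    rewrite meetC. eapply le_trans. apply riesz.
    apply nsm_ge0, Hb. apply pos_ge0. apply pos_ge0.
    unfold perp in P1. rewrite P1, add0r. apply meet_l. }
  assert (P4 : t <= pos (- x)) by (eapply le_trans; [apply pos_ge|exact P3]).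
  apply (le_add _ _ x) in P4. unfold t in P4. rewrite <- addA, addNr, addr0 in P4.
  rewrite addC, pos_opp_add in P4. exact P4.
Qed.

Lemma sup_step (x : nat -> G) s b Q K : islub x s -> 0 <= b ->
  (forall n, perp b (pos (nsm Q (x n) + K))) -> perp b (pos (nsm Q s + K)).
Proof.
  intros Hs Hb H.
  pose proof (lub_pos _ _ (lub_translate _ _ K (lub_nsm _ _ Q Hs))) as L.
  unfold perp. apply le_antisym.
  - apply (lub_meet _ _ b 0 L). intros n. rewrite (H n). apply le_refl.
  - apply meet_ge0; auto. apply pos_ge0.
Qed.


Lemma perp_dc b b' w : 0 <= w -> perp b w -> 0 <= b' -> b' <= b -> perp b' w.
Proof.
  intros Hw H H1 H2. apply perp_sym. apply perp_sym in H.
  apply (perp_le w b b'); auto.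
Qed.

Lemma perp_zero b : 0 <= b -> perp b 0.
Proof. intros Hb. unfold perp. apply le_antisym. apply meet_r. apply meet_ge0; auto. apply le_refl. Qed.

Lemma perp_of_le_pos b z : 0 <= b -> b <= pos z -> perp b (pos (- z)).
Proof.
  intros Hb H. apply perp_sym. apply (perp_le _ (pos z)); auto. apply pos_ge0.
  apply perp_sym, pos_perp.
Qed.
Lemma perp_of_le_neg b z : 0 <= b -> b <= pos (- z) -> perp b (pos z).
Proof.
  intros Hb H. apply perp_sym. apply (perp_le _ (pos (- z))); auto. apply pos_ge0.
  pose proof (pos_perp (- z)) as P. rewrite oppK in P. apply perp_sym, P.
Qed.

Lemma nsm_meet n x y : nsm n (x \m y) = nsm n x \m nsm n y.
Proof.
  assert (E : forall u v : G, u \m v = - (- u \v - v)).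
  { intros u v. rewrite opp_join, !oppK. reflexivity. }
  rewrite E, nsmN, nsm_join, !nsmN, <- E. reflexivity.
Qed.

Lemma le_addr_ge0 x y : 0 <= y -> x <= x + y.
Proof. intros H. apply (le_add_l _ _ x) in H. rewrite addr0 in H. exact H. Qed.
Lemma pos_join_le u v : pos (u \v v) <= pos u + pos v.
Proof.
  apply pos_lub.
  - apply join_lub.
    + eapply le_trans; [apply pos_ge|]. apply le_addr_ge0, pos_ge0.
    + eapply le_trans; [apply pos_ge|]. rewrite addC. apply le_addr_ge0, pos_ge0.
  - apply ge0_add; apply pos_ge0.
Qed.
Lemma perp_join b u v : 0 <= b -> perp b (pos u) -> perp b (pos v) -> perp b (pos (u \v v)).
Proof.
  intros Hb H1 H2. apply (perp_le _ (pos u + pos v)); auto. apply pos_ge0.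
  apply pos_join_le. apply perp_add; auto; apply pos_ge0.
Qed.

Section WithC.
Variable c : G.
Hypothesis Hc0 : 0 <= c.

Definition pos0 (b : G) := 0 <= b /\ b <> 0 /\ b <= c.
Definition Kc (m p : nat) := nsm m c + - nsm p c.
Definition Lz (x : G) (p m q : nat) := nsm (S q) x + Kc m p.
Definition Lc (b x : G) p m q := perp b (pos (Lz x p m q)).
Definition Uc (b x : G) p m q := perp b (pos (- Lz x p m q)).

Lemma Lc_dc b b' x p m q : Lc b x p m q -> 0 <= b' -> b' <= b -> Lc b' x p m q.
Proof. intros; eapply perp_dc; eauto. apply pos_ge0. Qed.
Lemma Uc_dc b b' x p m q : Uc b x p m q -> 0 <= b' -> b' <= b -> Uc b' x p m q.
Proof. intros; eapply perp_dc; eauto. apply pos_ge0. Qed.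

Lemma dense_split b w : 0 <= w -> pos0 b ->
  perp b w \/ (pos0 (b \m w) /\ b \m w <= b /\ b \m w <= w).
Proof.
  intros Hw [Hb [Hb0 Hbc]]. destruct (classic (b \m w = 0)) as [E|E].
  - left. exact E.
  - right. split; [split; [|split]|split]; auto. apply meet_ge0; auto.
    eapply le_trans; [apply meet_l|exact Hbc]. apply meet_l. apply meet_r.
Qed.

Definition DC (P : G -> Prop) := forall b b', P b -> 0 <= b' -> b' <= b -> P b'.
Definition Dense (P : G -> Prop) := forall b, pos0 b -> exists b', pos0 b' /\ b' <= b /\ P b'.

Lemma DC_and P Q : DC P -> DC Q -> DC (fun b => P b /\ Q b).
Proof. intros H1 H2 b b' [? ?] ? ?. split; eauto. Qed.
Lemma Dense_and P Q : DC Q -> Dense P -> Dense Q -> Dense (fun b => P b /\ Q b).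
Proof.
  intros H1 H2 H3 b Hb. destruct (H3 b Hb) as [b1 [Hb1 [Hle1 HQ]]].
  destruct (H2 b1 Hb1) as [b2 [Hb2 [Hle2 HP]]].
  exists b2. split; auto. split. eapply le_trans; eauto.
  split; auto. eapply H1; eauto. apply Hb2.
Qed.

Definition Rdec x p m q b := Lc b x p m q \/ Uc b x p m q.
Definition RfinU x b := exists n, Lc b x n 0 0.
Definition RfinL x b := exists n, Uc b x 0 n 0.
Definition Rsup (i : Inst G) p m q b :=
  match i with
  | Ibig g f => Lc b (sbig g f) p m q \/ exists n, Uc b (f n \m g) p m q
  | _ => True
  end.

Lemma DC_Rdec x p m q : DC (Rdec x p m q).
Proof. intros b b' [H|H] ? ?; [left; eapply Lc_dc|right; eapply Uc_dc]; eauto. Qed.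
Lemma DC_RfinU x : DC (RfinU x).
Proof. intros b b' [n H] ? ?. exists n; eapply Lc_dc; eauto. Qed.
Lemma DC_RfinL x : DC (RfinL x).
Proof. intros b b' [n H] ? ?. exists n; eapply Uc_dc; eauto. Qed.
Lemma DC_Rsup i p m q : DC (Rsup i p m q).
Proof.
  intros b b' H ? ?. destruct i; simpl in *; auto.
  destruct H as [H|[n H]]; [left; eapply Lc_dc|right; exists n; eapply Uc_dc]; eauto.
Qed.

Lemma Dense_Rdec x p m q : Dense (Rdec x p m q).
Proof.
  intros b Hb. destruct (dense_split b (pos (Lz x p m q)) (pos_ge0 _) Hb) as [H|[H1 [H2 H3]]].
  - exists b. split; auto. split. apply le_refl. left; exact H.
  - exists (b \m pos (Lz x p m q)). split; auto. split; auto. right.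
    apply perp_of_le_pos; auto. apply H1.
Qed.

Lemma Lz_fin_U x n : - Lz x n 0 0 = nsm n c + - x.
Proof. unfold Lz, Kc. simpl. rewrite addr0, add0r, oppD, oppK, addC. reflexivity. Qed.
Lemma Lz_fin_L x n : Lz x 0 n 0 = nsm n c + - - x.
Proof. unfold Lz, Kc. simpl. rewrite addr0, opp0, addr0, oppK, addC. reflexivity. Qed.

Lemma Dense_RfinU x : Dense (RfinU x).
Proof.
  intros b Hb.
  destruct (classic (exists n, ~ perp b (pos (- Lz x n 0 0)))) as [[n Hn]|Hn].
  - destruct (dense_split b _ (pos_ge0 (- Lz x n 0 0)) Hb) as [H|[H1 [H2 H3]]]. contradiction.
    exists (b \m pos (- Lz x n 0 0)). split; auto. split; auto.
    exists n. apply perp_of_le_neg; auto. apply H1.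
  - exfalso. destruct Hb as [Hb [Hb0 Hbc]]. apply Hb0. apply le_antisym; auto.
    apply (fin_lemma b c x Hb Hbc). intros n. rewrite <- Lz_fin_U.
    apply NNPP. intros C. apply Hn. exists n. exact C.
Qed.
Lemma Dense_RfinL x : Dense (RfinL x).
Proof.
  intros b Hb.
  destruct (classic (exists n, ~ perp b (pos (Lz x 0 n 0)))) as [[n Hn]|Hn].
  - destruct (dense_split b _ (pos_ge0 (Lz x 0 n 0)) Hb) as [H|[H1 [H2 H3]]]. contradiction.
    exists (b \m pos (Lz x 0 n 0)). split; auto. split; auto.
    exists n. apply perp_of_le_pos; auto. apply H1.
  - exfalso. destruct Hb as [Hb [Hb0 Hbc]]. apply Hb0. apply le_antisym; auto.
    apply (fin_lemma b c (- x) Hb Hbc). intros n. rewrite <- Lz_fin_L.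
    apply NNPP. intros C. apply Hn. exists n. exact C.
Qed.

Lemma Dense_Rsup i p m q : Dense (Rsup i p m q).
Proof.
  intros b Hb. destruct i; try (exists b; split; auto; split; [apply le_refl|exact I]).
  simpl.
  destruct (classic (Lc b (sbig g f) p m q)) as [H|H].
  - exists b; split; auto; split; [apply le_refl|left; exact H].
  - assert (Hn : exists n, ~ perp b (pos (Lz (f n \m g) p m q))).
    { apply NNPP. intros C. apply H. unfold Lc, Lz.
      apply (sup_step (fun n => f n \m g)). apply islub_big. apply Hb.
      intros n. apply NNPP. intros C2. apply C. exists n. exact C2. }
    destruct Hn as [n Hn].
    destruct (dense_split b _ (pos_ge0 (Lz (f n \m g) p m q)) Hb) as [H0|[H1 [H2 H3]]]. contradiction.
    exists (b \m pos (Lz (f n \m g) p m q)). split; auto. split; auto.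
    right. exists n. apply perp_of_le_pos; auto. apply H1.
Qed.

Lemma Kc_nsm n m p : nsm n (Kc m p) = Kc (n * m) (n * p).
Proof. unfold Kc. rewrite nsmD, nsmN, !nsm_mul. reflexivity. Qed.
Lemma Kc_add m p m' p' : Kc m p + Kc m' p' = Kc (m + m') (p + p').
Proof. unfold Kc. rewrite add4, <- oppD, !nsm_plus. reflexivity. Qed.
Lemma Kc_opp m p : - Kc m p = Kc p m.
Proof. unfold Kc. rewrite oppD, oppK, addC. reflexivity. Qed.
Lemma Lz_opp x p m q : - Lz x p m q = - nsm (S q) x + Kc p m.
Proof. unfold Lz. rewrite oppD, Kc_opp. reflexivity. Qed.

Lemma Kc_contra b A B : pos0 b -> perp b (pos (Kc A B)) -> (B < A)%nat -> False.
Proof.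
  intros [Hb [Hb0 Hbc]] H HAB. apply Hb0. apply le_antisym; auto.
  assert (E : Kc A B = nsm (A - B) c).
  { unfold Kc. replace A with ((A - B) + B)%nat at 1 by lia. rewrite nsm_plus, <- addA, addrN, addr0.
    reflexivity. }
  rewrite E in H.
  assert (Hle : b <= pos (nsm (A - B) c)).
  { eapply le_trans; [exact Hbc|]. eapply le_trans; [|apply pos_ge].
    replace (A - B)%nat with (1 + (A - B - 1))%nat by lia. rewrite nsm_plus. simpl.
    rewrite addr0. apply le_addr_ge0, nsm_ge0, Hc0. }
  unfold perp in H. rewrite <- H. apply meet_glb. apply le_refl. exact Hle.
Qed.

Lemma consistency_G b x p m q p' m' q' : pos0 b -> Uc b x p m q -> Lc b x p' m' q' ->
  (S q' * p + S q * m' <= S q' * m + S q * p')%nat.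
Proof.
  intros Hb HU HL. destruct (Compare_dec.le_lt_dec (S q' * p + S q * m') (S q' * m + S q * p')) as [|Hlt]; auto.
  exfalso. apply (Kc_contra b (S q' * p + S q * m') (S q' * m + S q * p') Hb); auto.
  pose proof (perp_comb b _ _ (S q') (S q) (proj1 Hb) HU HL) as P.
  assert (E : nsm (S q') (- Lz x p m q) + nsm (S q) (Lz x p' m' q')
              = Kc (S q' * p + S q * m') (S q' * m + S q * p')).
  { rewrite Lz_opp. unfold Lz. rewrite !nsmD, !Kc_nsm, nsmN, <- !nsm_mul.
    rewrite add4, (Nat.mul_comm (S q) (S q')), addNr, add0r, Kc_add. reflexivity. }
  rewrite E in P. exact P.
Qed.

Lemma Lz_add x y p1 m1 q1 p2 m2 q2 :
  nsm (S q2) (Lz x p1 m1 q1) + nsm (S q1) (Lz y p2 m2 q2) =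
  Lz (x + y) (S q2 * p1 + S q1 * p2) (S q2 * m1 + S q1 * m2) (S q1 * S q2 - 1).
Proof.
  unfold Lz. replace (S (S q1 * S q2 - 1)) with (S q1 * S q2)%nat by lia.
  rewrite !nsmD, !Kc_nsm, <- !nsm_mul, add4, Kc_add, (Nat.mul_comm (S q2) (S q1)). reflexivity.
Qed.
Lemma Lc_add b x y p1 m1 q1 p2 m2 q2 : 0 <= b -> Lc b x p1 m1 q1 -> Lc b y p2 m2 q2 ->
  Lc b (x + y) (S q2 * p1 + S q1 * p2) (S q2 * m1 + S q1 * m2) (S q1 * S q2 - 1).
Proof. intros Hb H1 H2. unfold Lc. rewrite <- Lz_add. apply perp_comb; auto. Qed.
Lemma Uc_add b x y p1 m1 q1 p2 m2 q2 : 0 <= b -> Uc b x p1 m1 q1 -> Uc b y p2 m2 q2 ->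
  Uc b (x + y) (S q2 * p1 + S q1 * p2) (S q2 * m1 + S q1 * m2) (S q1 * S q2 - 1).
Proof.
  intros Hb H1 H2. unfold Uc. rewrite <- Lz_add, oppD, <- !nsmN. apply perp_comb; auto.
Qed.
Lemma Lc_join b x y p m q : 0 <= b -> Lc b x p m q -> Lc b y p m q -> Lc b (x \v y) p m q.
Proof.
  intros Hb H1 H2. unfold Lc, Lz in *. rewrite nsm_join, addJr. apply perp_join; auto.
Qed.
Lemma Uc_meet b x y p m q : 0 <= b -> Uc b x p m q -> Uc b y p m q -> Uc b (x \m y) p m q.
Proof.
  intros Hb H1 H2. unfold Uc, Lz in *. rewrite nsm_meet, addMr, opp_meet. apply perp_join; auto.
Qed.
Lemma Uc_mono b x y p m q : 0 <= b -> x <= y -> Uc b x p m q -> Uc b y p m q.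
Proof.
  intros Hb Hxy H. unfold Uc in *. apply (perp_le _ (pos (- Lz x p m q))); auto. apply pos_ge0.
  apply pos_mono, le_opp. unfold Lz. apply le_add, nsm_le, Hxy.
Qed.
Lemma Lc_mono b x y p m q : 0 <= b -> x <= y -> Lc b y p m q -> Lc b x p m q.
Proof.
  intros Hb Hxy H. unfold Lc in *. apply (perp_le _ (pos (Lz y p m q))); auto. apply pos_ge0.
  apply pos_mono. unfold Lz. apply le_add, nsm_le, Hxy.
Qed.
Lemma Lz_c : Lz c 1 0 0 = 0.
Proof. unfold Lz, Kc. simpl. rewrite add0r, addrN. reflexivity. Qed.
Lemma Lc_c b : 0 <= b -> Lc b c 1 0 0.
Proof.
  intros Hb. unfold Lc. rewrite Lz_c. unfold pos. rewrite joinxx. apply perp_zero, Hb.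
Qed.
Lemma Uc_c b : 0 <= b -> Uc b c 1 0 0.
Proof.
  intros Hb. unfold Uc. rewrite Lz_c, opp0. unfold pos. rewrite joinxx. apply perp_zero, Hb.
Qed.

Section Seq.
Variable kap : nat -> Inst G.
Hypothesis Hcnz : c <> 0.

Definition Req (r : nat) (b : G) : Prop :=
  match Cantor.of_nat r with
  | (j, r1) => match Cantor.of_nat r1 with
    | (i, r2) => match Cantor.of_nat r2 with
      | (p, r3) => match Cantor.of_nat r3 with
        | (m, q) =>
          Rdec (elem (kap j) i) p m q b /\ (RfinU (elem (kap j) i) b /\
          (RfinL (elem (kap j) i) b /\ Rsup (kap j) p m q b))
        end end end end.

Lemma Req_dense r : Dense (Req r).
Proof.
  unfold Req. destruct (Cantor.of_nat r) as [j r1]. destruct (Cantor.of_nat r1) as [i r2].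
  destruct (Cantor.of_nat r2) as [p r3]. destruct (Cantor.of_nat r3) as [m q].
  apply Dense_and. apply DC_and. apply DC_RfinU. apply DC_and. apply DC_RfinL. apply DC_Rsup.
  apply Dense_Rdec.
  apply Dense_and. apply DC_and. apply DC_RfinL. apply DC_Rsup. apply Dense_RfinU.
  apply Dense_and. apply DC_Rsup. apply Dense_RfinL. apply Dense_Rsup.
Qed.

Lemma step_ex r b : exists b', pos0 b -> pos0 b' /\ b' <= b /\ Req r b'.
Proof.
  destruct (classic (pos0 b)) as [H|H].
  - destruct (Req_dense r b H) as [b' Hb']. exists b'; auto.
  - exists b. intros; contradiction.
Qed.
Definition step r b := proj1_sig (constructive_indefinite_description _ (step_ex r b)).
Lemma step_spec r b : pos0 b -> pos0 (step r b) /\ step r b <= b /\ Req r (step r b).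
Proof. unfold step. destruct constructive_indefinite_description as [b' H]. simpl. auto. Qed.

Fixpoint bs (k : nat) : G := match k with O => c | S k => step k (bs k) end.
Lemma bs_pos0 k : pos0 (bs k).
Proof.
  induction k; simpl.
  - split; [|split]; auto. apply le_refl.
  - apply step_spec, IHk.
Qed.
Lemma bs_le k k' : (k <= k')%nat -> bs k' <= bs k.
Proof.
  induction 1. apply le_refl. eapply le_trans; [|exact IHle]. simpl. apply step_spec, bs_pos0.
Qed.
Lemma bs_req k : Req k (bs (S k)).
Proof. simpl. apply step_spec, bs_pos0. Qed.
Lemma bs_ge0 k : 0 <= bs k. Proof. apply bs_pos0. Qed.

Definition LL x p m q := exists k, Lc (bs k) x p m q.
Definition UU x p m q := exists k, Uc (bs k) x p m q.
Definition decided x := (forall p m q, LL x p m q \/ UU x p m q) /\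
  (exists n, LL x n 0 0) /\ (exists n, UU x 0 n 0).



Lemma Req_spec j i p m q : exists k,
  Rdec (elem (kap j) i) p m q (bs k) /\ RfinU (elem (kap j) i) (bs k) /\
  RfinL (elem (kap j) i) (bs k) /\ Rsup (kap j) p m q (bs k).
Proof.
  set (r := Cantor.to_nat (j, Cantor.to_nat (i, Cantor.to_nat (p, Cantor.to_nat (m, q))))).
  exists (S r). pose proof (bs_req r) as H. unfold Req in H. unfold r in H at 1.
  rewrite !Cantor.cancel_of_to in H. exact H.
Qed.

Lemma elem_decided j i : decided (elem (kap j) i).
Proof.
  split; [|split].
  - intros p m q. destruct (Req_spec j i p m q) as [k [[H|H] _]]; [left|right]; exists k; exact H.
  - destruct (Req_spec j i 0 0 0) as [k [_ [[n H] _]]]. exists n, k. exact H.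
  - destruct (Req_spec j i 0 0 0) as [k [_ [_ [[n H] _]]]]. exists n, k. exact H.
Qed.

Lemma sup_decided j g f : kap j = Ibig g f -> forall p m q,
  LL (sbig g f) p m q \/ exists n, UU (f n \m g) p m q.
Proof.
  intros E p m q. destruct (Req_spec j 0 p m q) as [k [_ [_ [_ H]]]]. rewrite E in H. simpl in H.
  destruct H as [H|[n H]]; [left; exists k|right; exists n, k]; exact H.
Qed.

Lemma Lc_later k k' x p m q : (k <= k')%nat -> Lc (bs k) x p m q -> Lc (bs k') x p m q.
Proof. intros H1 H2. eapply Lc_dc; eauto. apply bs_ge0. apply bs_le, H1. Qed.
Lemma Uc_later k k' x p m q : (k <= k')%nat -> Uc (bs k) x p m q -> Uc (bs k') x p m q.
Proof. intros H1 H2. eapply Uc_dc; eauto. apply bs_ge0. apply bs_le, H1. Qed.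

Open Scope R_scope.
Definition val (p m q : nat) : R := (INR p - INR m) / INR (S q).

Lemma INR_S_pos q : 0 < INR (S q).
Proof. apply lt_0_INR. lia. Qed.

Lemma val_le_nat p m q p' m' q' :
  (S q' * p + S q * m' <= S q' * m + S q * p')%nat -> val p m q <= val p' m' q'.
Proof.
  intros H. apply le_INR in H. rewrite !plus_INR, !mult_INR in H.
  unfold val. pose proof (INR_S_pos q). pose proof (INR_S_pos q').
  set (Q := INR (S q)) in *. set (Q' := INR (S q')) in *.
  apply (Rmult_le_reg_r (Q * Q')). nra.
  replace ((INR p - INR m) / Q * (Q * Q')) with ((INR p - INR m) * Q') by (field; lra).
  replace ((INR p' - INR m') / Q' * (Q * Q')) with ((INR p' - INR m') * Q) by (field; lra).
  nra.
Qed.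

Lemma val_add p1 m1 q1 p2 m2 q2 :
  val (S q2 * p1 + S q1 * p2) (S q2 * m1 + S q1 * m2) (S q1 * S q2 - 1) = val p1 m1 q1 + val p2 m2 q2.
Proof.
  unfold val. replace (S (S q1 * S q2 - 1)) with (S q1 * S q2)%nat by lia.
  rewrite !plus_INR, !mult_INR. pose proof (INR_S_pos q1). pose proof (INR_S_pos q2).
  field. lra.
Qed.

Lemma IZR_nat_diff (z : Z) : IZR z = INR (Z.to_nat z) - INR (Z.to_nat (- z)).
Proof.
  destruct (Z.le_ge_cases 0 z) as [H|H].
  - replace (Z.to_nat (- z)) with 0%nat by lia. rewrite INR_IZR_INZ, Z2Nat.id by lia. simpl. lra.
  - replace (Z.to_nat z) with 0%nat by lia. rewrite (INR_IZR_INZ (Z.to_nat (- z))), Z2Nat.id by lia.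
    rewrite opp_IZR. simpl. lra.
Qed.

Lemma rat_dense a b : a < b -> exists p m q, a < val p m q < b.
Proof.
  intros Hab. destruct (archimed_cor1 (b - a)) as [N [HN1 HN2]]. lra.
  set (Q := INR N). assert (HQ : 0 < Q) by (apply lt_0_INR; lia).
  destruct (archimed (a * Q)) as [H1 H2].
  set (k := up (a * Q)) in *.
  exists (Z.to_nat k), (Z.to_nat (- k)), (N - 1)%nat.
  unfold val. rewrite <- IZR_nat_diff. replace (S (N - 1)) with N by lia. fold Q.
  split.
  - apply (Rmult_lt_reg_r Q); auto. unfold Rdiv. rewrite Rmult_assoc, Rinv_l by lra. lra.
  - apply (Rmult_lt_reg_r Q); auto. unfold Rdiv. rewrite Rmult_assoc, Rinv_l by lra.
    rewrite Rmult_1_r.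
    assert (/ Q * Q = 1) by (field; lra).
    assert (HN3 : / INR N * Q < (b - a) * Q) by (apply Rmult_lt_compat_r; auto).
    fold Q in HN3. rewrite H in HN3.
    nra.
Qed.

Lemma consistency x p m q p' m' q' : UU x p m q -> LL x p' m' q' -> val p m q <= val p' m' q'.
Proof.
  intros [k1 H1] [k2 H2]. apply val_le_nat.
  apply (consistency_G (bs (max k1 k2)) x); auto. apply bs_pos0.
  eapply Uc_later; [|exact H1]; lia.
  eapply Lc_later; [|exact H2]; lia.
Qed.

Definition Uset x : R -> Prop := fun r => exists p m q, r = val p m q /\ UU x p m q.

Definition hval (x : G) : R :=
  match excluded_middle_informative (bound (Uset x) /\ exists r, Uset x r) with
  | left H => proj1_sig (completeness _ (proj1 H) (proj2 H))
  | right _ => R0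
  end.

Lemma hval_lub x : decided x -> is_lub (Uset x) (hval x).
Proof.
  intros [Hd [[n Hn] [n' Hn']]]. unfold hval.
  destruct excluded_middle_informative as [H|H].
  - destruct completeness as [l Hl]. simpl. exact Hl.
  - exfalso. apply H. split.
    + exists (val n 0 0). intros r [p [m [q [-> Hr]]]]. eapply consistency; eauto.
    + exists (val 0 n' 0). exists 0%nat, n', 0%nat. split; auto.
Qed.

Lemma R1 x p m q : decided x -> UU x p m q -> val p m q <= hval x.
Proof. intros Hd H. apply (proj1 (hval_lub x Hd)). exists p, m, q. auto. Qed.
Lemma R2 x p m q : decided x -> LL x p m q -> hval x <= val p m q.
Proof.
  intros Hd H. apply (proj2 (hval_lub x Hd)). intros r [p' [m' [q' [-> Hr]]]].
  eapply consistency; eauto.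
Qed.
Lemma R3 x p m q : decided x -> val p m q < hval x -> UU x p m q.
Proof.
  intros Hd H. destruct (proj1 Hd p m q) as [HL|HU]; auto.
  apply R2 in HL; auto. lra.
Qed.
Lemma R4 x p m q : decided x -> hval x < val p m q -> LL x p m q.
Proof.
  intros Hd H. destruct (proj1 Hd p m q) as [HL|HU]; auto.
  apply R1 in HU; auto. lra.
Qed.

Lemma h_mono x y : decided x -> decided y -> sle x y -> hval x <= hval y.
Proof.
  intros Hx Hy Hxy. apply (proj2 (hval_lub x Hx)). intros r [p [m [q [-> [k Hr]]]]].
  apply R1; auto. exists k. eapply Uc_mono; eauto. apply bs_ge0.
Qed.

Lemma h_add x y : decided x -> decided y -> decided (sadd x y) -> hval (sadd x y) = hval x + hval y.
Proof.
  intros Hx Hy Hxy. apply Rle_antisym.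
  - destruct (Rle_lt_dec (hval (sadd x y)) (hval x + hval y)) as [|Hlt]; auto. exfalso.
    set (d := hval (sadd x y) - (hval x + hval y)).
    destruct (rat_dense (hval x) (hval x + d / 2)) as [p1 [m1 [q1 [A1 A2]]]]. unfold d; lra.
    destruct (rat_dense (hval y) (hval y + d / 2)) as [p2 [m2 [q2 [B1 B2]]]]. unfold d; lra.
    destruct (R4 x p1 m1 q1 Hx A1) as [k1 K1]. destruct (R4 y p2 m2 q2 Hy B1) as [k2 K2].
    assert (LL (sadd x y) (S q2 * p1 + S q1 * p2) (S q2 * m1 + S q1 * m2) (S q1 * S q2 - 1)).
    { exists (max k1 k2). apply Lc_add. apply bs_ge0.
      eapply Lc_later; [|exact K1]; lia. eapply Lc_later; [|exact K2]; lia. }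
    apply R2 in H; auto. rewrite val_add in H. unfold d in *. lra.
  - destruct (Rle_lt_dec (hval x + hval y) (hval (sadd x y))) as [|Hlt]; auto. exfalso.
    set (d := (hval x + hval y) - hval (sadd x y)).
    destruct (rat_dense (hval x - d / 2) (hval x)) as [p1 [m1 [q1 [A1 A2]]]]. unfold d; lra.
    destruct (rat_dense (hval y - d / 2) (hval y)) as [p2 [m2 [q2 [B1 B2]]]]. unfold d; lra.
    destruct (R3 x p1 m1 q1 Hx A2) as [k1 K1]. destruct (R3 y p2 m2 q2 Hy B2) as [k2 K2].
    assert (UU (sadd x y) (S q2 * p1 + S q1 * p2) (S q2 * m1 + S q1 * m2) (S q1 * S q2 - 1)).
    { exists (max k1 k2). apply Uc_add. apply bs_ge0.
      eapply Uc_later; [|exact K1]; lia. eapply Uc_later; [|exact K2]; lia. }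
    apply R1 in H; auto. rewrite val_add in H. unfold d in *. lra.
Qed.

Lemma h_join x y : decided x -> decided y -> decided (x \v y) -> hval (x \v y) = Rmax (hval x) (hval y).
Proof.
  intros Hx Hy Hxy. apply Rle_antisym.
  - destruct (Rle_lt_dec (hval (x \v y)) (Rmax (hval x) (hval y))) as [|Hlt]; auto. exfalso.
    destruct (rat_dense _ _ Hlt) as [p [m [q [A1 A2]]]].
    destruct (R4 x p m q Hx) as [k1 K1]. pose proof (Rmax_l (hval x) (hval y)). lra.
    destruct (R4 y p m q Hy) as [k2 K2]. pose proof (Rmax_r (hval x) (hval y)). lra.
    assert (LL (x \v y) p m q).
    { exists (max k1 k2). apply Lc_join. apply bs_ge0.
      eapply Lc_later; [|exact K1]; lia. eapply Lc_later; [|exact K2]; lia. }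
    apply R2 in H; auto. lra.
  - apply Rmax_lub; apply h_mono; auto. apply join_l. apply join_r.
Qed.

Lemma h_meet x y : decided x -> decided y -> decided (x \m y) -> hval (x \m y) = Rmin (hval x) (hval y).
Proof.
  intros Hx Hy Hxy. apply Rle_antisym.
  - apply Rmin_glb; apply h_mono; auto. apply meet_l. apply meet_r.
  - destruct (Rle_lt_dec (Rmin (hval x) (hval y)) (hval (x \m y))) as [|Hlt]; auto. exfalso.
    destruct (rat_dense _ _ Hlt) as [p [m [q [A1 A2]]]].
    destruct (R3 x p m q Hx) as [k1 K1]. pose proof (Rmin_l (hval x) (hval y)). lra.
    destruct (R3 y p m q Hy) as [k2 K2]. pose proof (Rmin_r (hval x) (hval y)). lra.
    assert (UU (x \m y) p m q).
    { exists (max k1 k2). apply Uc_meet. apply bs_ge0.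
      eapply Uc_later; [|exact K1]; lia. eapply Uc_later; [|exact K2]; lia. }
    apply R1 in H; auto. lra.
Qed.

Lemma h_c : decided c -> hval c = 1.
Proof.
  intros Hd. apply Rle_antisym.
  - replace 1 with (val 1 0 0) by (unfold val; simpl; field).
    apply R2; auto. exists 0%nat. apply Lc_c, bs_ge0.
  - replace 1 with (val 1 0 0) by (unfold val; simpl; field).
    apply R1; auto. exists 0%nat. apply Uc_c, bs_ge0.
Qed.

Lemma is_lub_uniq (E : R -> Prop) a b : is_lub E a -> is_lub E b -> a = b.
Proof. intros [H1 H2] [H3 H4]. apply Rle_antisym; auto. Qed.

Lemma h_sup j g f : kap j = Ibig g f -> decided (sbig g f) -> decided g ->
  (forall n, decided (f n)) -> (forall n, decided (f n \m g)) ->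
  hval (sbig g f) = Rbig (hval g) (fun n => hval (f n)).
Proof.
  intros E Hs Hg Hf Hfg. apply (is_lub_uniq (Rsup_set (hval g) (fun n => hval (f n)))); [|apply Rbig_lub].
  split.
  - intros r [n ->]. rewrite <- h_meet; auto. apply h_mono; auto. apply big_ub.
  - intros u Hu. destruct (Rle_lt_dec (hval (sbig g f)) u) as [|Hlt]; auto. exfalso.
    destruct (rat_dense _ _ Hlt) as [p [m [q [A1 A2]]]].
    destruct (sup_decided j g f E p m q) as [H|[n H]].
    + apply R2 in H; auto. lra.
    + apply R1 in H; auto. rewrite h_meet in H; auto.
      assert (Rmin (hval (f n)) (hval g) <= u) by (apply Hu; exists n; reflexivity). lra.
Qed.
Close Scope R_scope.

End Seq.

End WithC.


Lemma h_zero c (Hc0 : 0 <= c) kap (Hcnz : c <> 0) :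
  decided c kap 0 -> hval c kap 0 = R0.
Proof.
  intros H0. pose proof (h_add c Hc0 kap Hcnz 0 0 H0 H0) as E. rewrite addr0 in E.
  specialize (E H0). lra.
Qed.

Lemma all_sat c (Hc0 : 0 <= c) kap (Hcnz : c <> 0) j : sat (hval c kap) (kap j).
Proof.
  pose proof (elem_decided c Hc0 kap Hcnz j) as D.
  destruct (kap j) eqn:E; simpl.
  - pose proof (D 0%nat) as D0; pose proof (D 1%nat) as D1; pose proof (D 2%nat) as D2.
    simpl in D0, D1, D2. apply h_add; auto.
  - pose proof (D 0%nat) as D0; pose proof (D 1%nat) as D1; pose proof (D 2%nat) as D2.
    simpl in D0, D1, D2.
    pose proof (h_add c Hc0 kap Hcnz x (- x) D0 D1) as H. rewrite addrN in H.
    specialize (H D2). rewrite (h_zero c Hc0 kap Hcnz D2) in H. lra.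
  - pose proof (D 0%nat) as D0; pose proof (D 1%nat) as D1; pose proof (D 2%nat) as D2.
    simpl in D0, D1, D2. apply h_join; auto.
  - pose proof (D 0%nat) as D0; pose proof (D 1%nat) as D1; pose proof (D 2%nat) as D2.
    simpl in D0, D1, D2. apply h_meet; auto.
  - pose proof (D 0%nat) as D0. simpl in D0. apply h_zero; auto.
  - apply (h_sup c Hc0 kap Hcnz j); auto.
    + pose proof (D (Cantor.to_nat (0, 0))%nat) as D0. unfold elem in D0.
      rewrite Cantor.cancel_of_to in D0. exact D0.
    + pose proof (D (Cantor.to_nat (1, 0))%nat) as D0. unfold elem in D0.
      rewrite Cantor.cancel_of_to in D0. exact D0.
    + intros n. pose proof (D (Cantor.to_nat (2, n))%nat) as D0. unfold elem in D0.
      rewrite Cantor.cancel_of_to in D0. exact D0.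
    + intros n. pose proof (D (Cantor.to_nat (3, n))%nat) as D0. unfold elem in D0.
      rewrite Cantor.cancel_of_to in D0. exact D0.
Qed.

Definition kap' (a b : G) (kap : nat -> Inst G) (n : nat) : Inst G :=
  match n with
  | O => Iadd a (- b)
  | 1 => Iadd b (- b)
  | 2 => Izero
  | 3 => Ijoin (a + - b) 0
  | S (S (S (S n))) => kap n
  end.

Lemma core_pos (a b : G) (kap : nat -> Inst G) : pos (a + - b) <> 0 ->
  exists h : G -> R, (forall n, sat h (kap n)) /\ h a <> h b.
Proof.
  intros Hnz. set (c := pos (a + - b)). assert (Hc0 : 0 <= c) by apply pos_ge0.
  exists (hval c (kap' a b kap)). split.
  - intros n. apply (all_sat c Hc0 (kap' a b kap) Hnz (S (S (S (S n))))).
  - pose proof (all_sat c Hc0 (kap' a b kap) Hnz 0) as S0.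
    pose proof (all_sat c Hc0 (kap' a b kap) Hnz 1) as S1.
    pose proof (all_sat c Hc0 (kap' a b kap) Hnz 2) as S2.
    pose proof (all_sat c Hc0 (kap' a b kap) Hnz 3) as S3.
    simpl in S0, S1, S2, S3. rewrite addrN, S2 in S1.
    pose proof (elem_decided c Hc0 (kap' a b kap) Hnz 3 2) as Dc. simpl in Dc.
    fold (pos (a + - b)) in S3, Dc. fold c in S3, Dc.
    rewrite (h_c c Hc0 _ Hnz Dc), S2, S0 in S3.
    intros Hab. rewrite Hab in S3. unfold Rmax in S3. destruct Rle_dec; lra.
Qed.

Lemma core_sep (a b : G) (kap : nat -> Inst G) : a <> b ->
  exists h : G -> R, (forall n, sat h (kap n)) /\ h a <> h b.
Proof.
  intros Hab. destruct (classic (pos (a + - b) = 0)) as [H1|H1].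
  - destruct (classic (pos (b + - a) = 0)) as [H2|H2].
    + exfalso. apply Hab.
      assert (E : a + - b = pos (a + - b) + - pos (- (a + - b))).
      { rewrite <- (pos_opp_add (a + - b)). rewrite <- addA, addrN, addr0. reflexivity. }
      assert (E2 : - (a + - b) = b + - a). { rewrite oppD, oppK, addC. reflexivity. }
      rewrite E2, H1, H2, opp0, addr0 in E.
      apply (f_equal (fun z => z + b)) in E. rewrite <- addA, addNr, addr0, add0r in E. exact E.
    + destruct (core_pos b a kap H2) as [h [Hs Hh]]. exists h. split; auto.
  - apply core_pos; auto.
Qed.

End LG.

From Stdlib Require Import FunctionalExtensionality PropExtensionality ProofIrrelevance.

Definition mergeN {G : slg} (ks : nat -> nat -> Inst G) (n : nat) : Inst G :=
  let (i, k) := Cantor.of_nat n in ks i k.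
Lemma sat_mergeN {G : slg} (h : G -> R) ks :
  (forall n, sat h (mergeN ks n)) -> forall i k, sat h (ks i k).
Proof.
  intros H i k. specialize (H (Cantor.to_nat (i, k))). unfold mergeN in H.
  rewrite Cantor.cancel_of_to in H. exact H.
Qed.
Definition merge2 {G : slg} (k1 k2 : nat -> Inst G) : nat -> Inst G :=
  mergeN (fun i => match i with O => k1 | _ => k2 end).
Lemma sat_merge2 {G : slg} (h : G -> R) k1 k2 :
  (forall n, sat h (merge2 k1 k2 n)) -> (forall n, sat h (k1 n)) /\ (forall n, sat h (k2 n)).
Proof.
  intros H. pose proof (sat_mergeN h _ H) as H'. split; intros n; [apply (H' 0%nat)|apply (H' 1%nat)].
Qed.

Section Quot.
Variable G : slg.
Definition Ix := G -> R.
Definition PP := Rpow Ix.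

Definition qeq (x y : Ix -> R) : Prop :=
  exists kap : nat -> Inst G, forall h : Ix, (forall n, sat h (kap n)) -> x h = y h.

Lemma qeq_refl x : qeq x x.
Proof. exists (fun _ => Izero). auto. Qed.
Lemma qeq_sym x y : qeq x y -> qeq y x.
Proof. intros [k H]. exists k. intros h Hh. symmetry. auto. Qed.
Lemma qeq_trans x y z : qeq x y -> qeq y z -> qeq x z.
Proof.
  intros [k1 H1] [k2 H2]. exists (merge2 k1 k2). intros h Hh.
  apply sat_merge2 in Hh. destruct Hh. rewrite H1, H2; auto.
Qed.
Lemma qeq_op2 (op : R -> R -> R) x x' y y' : qeq x x' -> qeq y y' ->
  qeq (fun h => op (x h) (y h)) (fun h => op (x' h) (y' h)).
Proof.
  intros [k1 H1] [k2 H2]. exists (merge2 k1 k2). intros h Hh.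
  apply sat_merge2 in Hh. destruct Hh. rewrite H1, H2; auto.
Qed.
Lemma qeq_op1 (op : R -> R) x x' : qeq x x' -> qeq (fun h => op (x h)) (fun h => op (x' h)).
Proof. intros [k1 H1]. exists k1. intros h Hh. rewrite H1; auto. Qed.
Lemma qeq_big g g' (f f' : nat -> Ix -> R) : qeq g g' -> (forall n, qeq (f n) (f' n)) ->
  qeq (fun h => Rbig (g h) (fun n => f n h)) (fun h => Rbig (g' h) (fun n => f' n h)).
Proof.
  intros [k0 H0] Hf.
  set (ks := fun n => proj1_sig (constructive_indefinite_description _ (Hf n))).
  assert (Hks : forall n h, (forall m, sat h (ks n m)) -> f n h = f' n h).
  { intros n. unfold ks. destruct constructive_indefinite_description as [k Hk]. simpl. exact Hk. }
  exists (merge2 k0 (mergeN ks)). intros h Hh. apply sat_merge2 in Hh. destruct Hh as [Ha Hb].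
  pose proof (sat_mergeN h ks Hb) as Hc.
  rewrite H0 by auto. f_equal. apply functional_extensionality. intros n. apply Hks. apply Hc.
Qed.

Definition Qcar := { S : (Ix -> R) -> Prop | exists x, S = qeq x }.
Definition cls (x : Ix -> R) : Qcar := exist _ (qeq x) (ex_intro _ x eq_refl).
Definition rep (A : Qcar) : Ix -> R :=
  proj1_sig (constructive_indefinite_description _ (proj2_sig A)).
Lemma cls_eq x y : qeq x y -> cls x = cls y.
Proof.
  intros H. unfold cls. apply eq_sig_hprop. intros; apply proof_irrelevance. simpl.
  apply functional_extensionality. intros z. apply propositional_extensionality. split; intros H'.
  - eapply qeq_trans; [apply qeq_sym, H|exact H'].
  - eapply qeq_trans; [exact H|exact H'].
Qed.
Lemma cls_inv x y : cls x = cls y -> qeq x y.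
Proof.
  intros H. apply (f_equal (@proj1_sig _ _)) in H. simpl in H.
  assert (qeq y y) by apply qeq_refl. rewrite <- H in H0. exact H0.
Qed.
Lemma cls_rep A : cls (rep A) = A.
Proof.
  destruct A as [S HS]. unfold rep. simpl. destruct constructive_indefinite_description as [x Hx].
  simpl. unfold cls. apply eq_sig_hprop. intros; apply proof_irrelevance. simpl. symmetry. exact Hx.
Qed.
Lemma rep_cls x : qeq (rep (cls x)) x.
Proof. apply cls_inv. rewrite cls_rep. reflexivity. Qed.

Definition Qalg : slg :=
  Slg Qcar (cls (@s0 PP))
    (fun A B => cls (@sadd PP (rep A) (rep B)))
    (fun A => cls (@sopp PP (rep A)))
    (fun A B => cls (@sjoin PP (rep A) (rep B)))
    (fun A B => cls (@smeet PP (rep A) (rep B)))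
    (fun A F => cls (@sbig PP (rep A) (fun n => rep (F n)))).

Definition phiQ : PP -> Qalg := cls.

Lemma phiQ_hom : is_hom phiQ.
Proof.
  unfold is_hom, phiQ; simpl. split; [reflexivity|]. split; [|split; [|split; [|split]]].
  - intros x y. apply cls_eq. apply qeq_op2; apply qeq_sym, rep_cls.
  - intros x. apply cls_eq. apply qeq_op1; apply qeq_sym, rep_cls.
  - intros x y. apply cls_eq. apply qeq_op2; apply qeq_sym, rep_cls.
  - intros x y. apply cls_eq. apply qeq_op2; apply qeq_sym, rep_cls.
  - intros g f. apply cls_eq. apply qeq_big. apply qeq_sym, rep_cls. intros n. apply qeq_sym, rep_cls.
Qed.
Lemma phiQ_surj : forall y : Qalg, exists x, phiQ x = y.
Proof. intros y. exists (rep y). apply cls_rep. Qed.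

Definition ev (a : G) : PP := fun h => h a.
Definition psiQ (a : G) : Qalg := phiQ (ev a).

Lemma qeq_inst (i : Inst G) x y : (forall h : Ix, sat h i -> x h = y h) -> qeq x y.
Proof. intros H. exists (fun _ => i). intros h Hh. apply H, (Hh 0%nat). Qed.

Lemma psiQ_hom : is_hom psiQ.
Proof.
  destruct phiQ_hom as [H0 [H1 [H2 [H3 [H4 H5]]]]].
  unfold is_hom, psiQ. split; [|split; [|split; [|split; [|split]]]].
  - rewrite <- H0. apply cls_eq. apply (qeq_inst Izero). intros h Hh. exact Hh.
  - intros x y. rewrite <- H1. apply cls_eq. apply (qeq_inst (Iadd x y)). intros h Hh. exact Hh.
  - intros x. rewrite <- H2. apply cls_eq. apply (qeq_inst (Iopp x)). intros h Hh. exact Hh.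
  - intros x y. rewrite <- H3. apply cls_eq. apply (qeq_inst (Ijoin x y)). intros h Hh. exact Hh.
  - intros x y. rewrite <- H4. apply cls_eq. apply (qeq_inst (Imeet x y)). intros h Hh. exact Hh.
  - intros g f. rewrite <- H5. apply cls_eq. apply (qeq_inst (Ibig g f)). intros h Hh. exact Hh.
Qed.

Lemma psiQ_inj : in_variety G -> forall a b : G, psiQ a = psiQ b -> a = b.
Proof.
  intros HG a b H. apply cls_inv in H. destruct H as [k Hk].
  apply NNPP. intros Hab. destruct (core_sep G HG a b k Hab) as [h [Hs Hh]].
  apply Hh. apply (Hk h Hs).
Qed.
End Quot.

Lemma teval_hom {X : Type} (A B : slg) (f : A -> B) (v : X -> A) (t : term X) :
  is_hom f -> f (teval A v t) = teval B (fun x => f (v x)) t.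
Proof.
  intros [H0 [H1 [H2 [H3 [H4 H5]]]]].
  induction t as [x| |s IHs u IHu|s IHs|s IHs u IHu|s IHs u IHu|s IHs fs IHfs]; simpl.
  - reflexivity.
  - exact H0.
  - rewrite H1, IHs, IHu. reflexivity.
  - rewrite H2, IHs. reflexivity.
  - rewrite H3, IHs, IHu. reflexivity.
  - rewrite H4, IHs, IHu. reflexivity.
  - rewrite H5, IHs. f_equal. apply functional_extensionality. intros n. apply IHfs.
Qed.

Lemma teval_pow {X : Type} (I : Type) (w : X -> Rpow I) (t : term X) :
  teval (Rpow I) w t = fun i => teval R_alg (fun x => w x i) t.
Proof.
  induction t as [x| |s IHs u IHu|s IHs|s IHs u IHu|s IHs u IHu|s IHs fs IHfs]; simpl.
  - reflexivity.
  - reflexivity.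
  - rewrite IHs, IHu. reflexivity.
  - rewrite IHs. reflexivity.
  - rewrite IHs, IHu. reflexivity.
  - rewrite IHs, IHu. reflexivity.
  - rewrite IHs. apply functional_extensionality. intros i. f_equal.
    apply functional_extensionality. intros n. rewrite IHfs. reflexivity.
Qed.

Ltac rmm := unfold Rmax, Rmin; repeat destruct Rle_dec; lra.

Lemma Rbig_le g f u : (forall n, Rmin (f n) g <= u) -> Rbig g f <= u.
Proof. intros H. apply (proj2 (Rbig_lub g f)). intros x [n ->]. apply H. Qed.
Lemma Rbig_ge g f n : Rmin (f n) g <= Rbig g f.
Proof. apply (proj1 (Rbig_lub g f)). exists n. reflexivity. Qed.

Lemma R_A1 g f : Rbig g f = Rbig g (fun n => Rmin (f n) g).
Proof.
  apply Rle_antisym; apply Rbig_le; intros n.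
  - eapply Rle_trans; [|apply (Rbig_ge g (fun n => Rmin (f n) g) n)]. simpl. rmm.
  - eapply Rle_trans; [|apply (Rbig_ge g f n)]. rmm.
Qed.
Lemma R_A2 g f : Rbig g f = Rmax (Rmin (f O) g) (Rbig g (fun n => f (S n))).
Proof.
  apply Rle_antisym.
  - apply Rbig_le. intros [|n].
    + apply Rmax_l.
    + eapply Rle_trans; [|apply Rmax_r]. apply (Rbig_ge g (fun n => f (S n)) n).
  - apply Rmax_lub. apply Rbig_ge. apply Rbig_le. intros n. apply (Rbig_ge g f (S n)).
Qed.
Lemma R_A3 g h f : Rmin (Rbig g (fun n => Rmin (f n) h)) h = Rbig g (fun n => Rmin (f n) h).
Proof.
  apply Rmin_left. apply Rbig_le. intros n. rmm.
Qed.

Lemma R_in_variety : in_variety R_alg.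
Proof.
  constructor; simpl; intros; try rmm; try lra.
  apply R_A1. apply R_A2. unfold sle; simpl. apply R_A3.
Qed.

Lemma Rpow_holds {X : Type} (I : Type) (s t : term X) :
  holds_in R_alg s t -> holds_in (Rpow I) s t.
Proof.
  intros H w. rewrite !teval_pow. apply functional_extensionality. intros i. apply H.
Qed.

Local Open Scope nat_scope.
Theorem mainTheorem12 :
  (forall G : slg, in_variety G ->
     exists (I : Type) (H : slg) (phi : Rpow I -> H) (psi : G -> H),
       is_hom phi /\ (forall y : H, exists x, phi x = y) /\
       is_hom psi /\ (forall a b : G, psi a = psi b -> a = b)) /\
  (forall A : slg, in_variety A <->
     (forall (X : Type) (s t : term X), holds_in R_alg s t -> holds_in A s t)).
Proof.
  assert (P1 : forall G : slg, in_variety G ->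
     exists (I : Type) (H : slg) (phi : Rpow I -> H) (psi : G -> H),
       is_hom phi /\ (forall y : H, exists x, phi x = y) /\
       is_hom psi /\ (forall a b : G, psi a = psi b -> a = b)).
  { intros G HG. exists (Ix G), (Qalg G), (phiQ G), (psiQ G).
    split. apply phiQ_hom. split. apply phiQ_surj. split. apply psiQ_hom. apply psiQ_inj; auto. }
  split; [exact P1|]. intros A. split.
  - intros HA X s t Hst v. destruct (P1 A HA) as [I [H [phi [psi [Hphi [Hsurj [Hpsi Hinj]]]]]]].
    set (w := fun x => proj1_sig (constructive_indefinite_description _ (Hsurj (psi (v x))))).
    assert (Hw : forall x, phi (w x) = psi (v x)).
    { intros x. unfold w. destruct constructive_indefinite_description as [y Hy]. exact Hy. }
    apply Hinj. rewrite !(teval_hom A H psi v) by auto.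
    assert (E : (fun x => psi (v x)) = (fun x => phi (w x))).
    { apply functional_extensionality. intros x. symmetry. apply Hw. }
    rewrite E. rewrite <- !(teval_hom (Rpow I) H phi w) by auto. f_equal.
    apply (Rpow_holds I s t Hst).
  - intros Heq.
    assert (HR : forall (s t : term nat), (forall w : nat -> R, teval R_alg w s = teval R_alg w t) ->
              forall v : nat -> A, teval A v s = teval A v t).
    { intros s t H v. apply (Heq nat s t H v). }
    constructor.
    + intros x y z.
      exact (HR (tadd (tvar 0) (tadd (tvar 1) (tvar 2))) (tadd (tadd (tvar 0) (tvar 1)) (tvar 2))
               (fun w => ltac:(simpl; lra)) (fun n => match n with 0 => x | 1 => y | _ => z end)).
    + intros x y.
      exact (HR (tadd (tvar 0) (tvar 1)) (tadd (tvar 1) (tvar 0))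
               (fun w => ltac:(simpl; lra)) (fun n => match n with 0 => x | _ => y end)).
    + intros x.
      exact (HR (tadd (tvar 0) t0) (tvar 0)
               (fun w => ltac:(simpl; lra)) (fun n => x)).
    + intros x.
      exact (HR (tadd (tvar 0) (topp (tvar 0))) t0
               (fun w => ltac:(simpl; lra)) (fun n => x)).
    + intros x y z.
      exact (HR (tjoin (tvar 0) (tjoin (tvar 1) (tvar 2))) (tjoin (tjoin (tvar 0) (tvar 1)) (tvar 2))
               (fun w => ltac:(simpl; rmm)) (fun n => match n with 0 => x | 1 => y | _ => z end)).
    + intros x y.
      exact (HR (tjoin (tvar 0) (tvar 1)) (tjoin (tvar 1) (tvar 0))
               (fun w => ltac:(simpl; rmm)) (fun n => match n with 0 => x | _ => y end)).
    + intros x y z.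
      exact (HR (tmeet (tvar 0) (tmeet (tvar 1) (tvar 2))) (tmeet (tmeet (tvar 0) (tvar 1)) (tvar 2))
               (fun w => ltac:(simpl; rmm)) (fun n => match n with 0 => x | 1 => y | _ => z end)).
    + intros x y.
      exact (HR (tmeet (tvar 0) (tvar 1)) (tmeet (tvar 1) (tvar 0))
               (fun w => ltac:(simpl; rmm)) (fun n => match n with 0 => x | _ => y end)).
    + intros x y.
      exact (HR (tjoin (tvar 0) (tmeet (tvar 0) (tvar 1))) (tvar 0)
               (fun w => ltac:(simpl; rmm)) (fun n => match n with 0 => x | _ => y end)).
    + intros x y.
      exact (HR (tmeet (tvar 0) (tjoin (tvar 0) (tvar 1))) (tvar 0)
               (fun w => ltac:(simpl; rmm)) (fun n => match n with 0 => x | _ => y end)).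
    + intros x y z.
      exact (HR (tadd (tvar 0) (tjoin (tvar 1) (tvar 2))) (tjoin (tadd (tvar 0) (tvar 1)) (tadd (tvar 0) (tvar 2)))
               (fun w => ltac:(simpl; rmm)) (fun n => match n with 0 => x | 1 => y | _ => z end)).
    + intros x y z.
      exact (HR (tadd (tvar 0) (tmeet (tvar 1) (tvar 2))) (tmeet (tadd (tvar 0) (tvar 1)) (tadd (tvar 0) (tvar 2)))
               (fun w => ltac:(simpl; rmm)) (fun n => match n with 0 => x | 1 => y | _ => z end)).
    + intros g f.
      exact (HR (tbig (tvar 0) (fun n => tvar (S n)))
                (tbig (tvar 0) (fun n => tmeet (tvar (S n)) (tvar 0)))
               (fun w => R_A1 (w 0%nat) (fun n => w (S n)))
               (fun n => match n with 0 => g | S k => f k end)).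
    + intros g f.
      exact (HR (tbig (tvar 0) (fun n => tvar (S n)))
                (tjoin (tmeet (tvar 1) (tvar 0)) (tbig (tvar 0) (fun n => tvar (S (S n)))))
               (fun w => R_A2 (w 0%nat) (fun n => w (S n)))
               (fun n => match n with 0 => g | S k => f k end)).
    + intros g h f. unfold sle.
      exact (HR (tmeet (tbig (tvar 0) (fun n => tmeet (tvar (S (S n))) (tvar 1))) (tvar 1))
                (tbig (tvar 0) (fun n => tmeet (tvar (S (S n))) (tvar 1)))
               (fun w => R_A3 (w 0%nat) (w 1%nat) (fun n => w (S (S n))))
               (fun n => match n with 0 => g | 1 => h | S (S k) => f k end)).
Qed.
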